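(* Let $k$ be a field, $x$ an indeterminate, and $R=k[x, x^{2/3^n} : n\ge 1]$, i.e. the monoid algebra over $k$ of the additive monoid $M\subseteq\mathbb{Q}_{\ge0}$ generated by $1$ and $2/3^n$ for all $n\ge1$. Then $1$ is the unique atom of $M$ (every $2/3^n$ is a sum of other nonzero elements of $M$); consequently $x$ is irreducible in $R$, while $x^{2/3}$ is not a product of irreducible elements of $R$. In particular, since $x\cdot x = (x^{2/3})^3$, the set of non-atomic nonzero nonunits of $R$ is not multiplicatively closed.
   Context: An atom of a commutative monoid $M$ (written additively, with no nonzero units) is a nonzero element not expressible as a sum of two nonzero elements. An element of an integral domain is atomic if it is a finite product of irreducible elements. *)

(* Defs.v *)
From HB Require Import structures.
From mathcomp Require Import all_boot all_order all_algebra.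
Set Implicit Arguments. Unset Strict Implicit. Unset Printing Implicit Defensive.
Import Order.TTheory GRing.Theory Num.Theory.
Local Open Scope ring_scope.

(** The additive monoid M ⊆ Q_{>=0} generated by 1 and 2/3^n (n >= 1):
    q ∈ M iff q = a·1 + Σ_{n ∈ s} 2/3^(n+1) for some a : nat, s : seq nat
    (s is a multiset of exponents, so each generator may be used repeatedly). *)
Definition inM (q : rat) : Prop :=
  exists (a : nat) (s : seq nat),
    q = a%:R + \sum_(n <- s) (2%:R / (3%:R ^+ n.+1) : rat).

Definition atomM (q : rat) : Prop :=
  inM q /\ q != 0 /\
  ~ (exists a b, inM a /\ inM b /\ a != 0 /\ b != 0 /\ q = a + b).

(** The monoid algebra k[M] (inside k[Q]) is modelled by formal finite sums
    Σ c_i x^{e_i}, represented by lists of (coefficient, exponent) pairs,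
    up to equality of coefficient functions. *)
Section MonoidAlgebra.
Variable k : fieldType.

Definition mpoly := seq (k * rat).

Definition mcoef (f : mpoly) (q : rat) : k :=
  \sum_(p <- f | p.2 == q) p.1.

Definition meq (f g : mpoly) : Prop := forall q, mcoef f q = mcoef g q.

Definition mzero (f : mpoly) : Prop := forall q, mcoef f q = 0.

Definition mone : mpoly := [:: (1, 0)].

Definition mmul (f g : mpoly) : mpoly :=
  [seq (a.1 * b.1, a.2 + b.2) | a <- f, b <- g].

Definition mprod (fs : seq mpoly) : mpoly := foldr mmul mone fs.

Definition inR (f : mpoly) : Prop := forall q, mcoef f q != 0 -> inM q.

Definition unitR (u : mpoly) : Prop :=
  inR u /\ exists v, inR v /\ meq (mmul u v) mone.

Definition irreducibleR (f : mpoly) : Prop :=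
  inR f /\ ~ mzero f /\ ~ unitR f /\
  forall g h, inR g -> inR h -> meq f (mmul g h) -> unitR g \/ unitR h.

Definition atomicR (f : mpoly) : Prop :=
  exists fs : seq mpoly, (forall g, g \in fs -> irreducibleR g) /\ meq f (mprod fs).

Definition nonatomicR (f : mpoly) : Prop :=
  inR f /\ ~ mzero f /\ ~ unitR f /\ ~ atomicR f.

Definition mmono (q : rat) : mpoly := [:: (1, q)].

End MonoidAlgebra.

(* Main.v *)
Require Import Defs.
From HB Require Import structures.
From mathcomp Require Import all_boot all_order all_algebra.
From mathcomp Require Import ring lra zify.
Import Order.TTheory GRing.Theory Num.Theory.
Local Open Scope ring_scope.
Set Implicit Arguments. Unset Strict Implicit.

Definition gen (n : nat) : rat := 2%:R / 3%:R ^+ n.+1.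

Lemma gen_gt0 n : 0 < gen n.
Proof. by rewrite /gen divr_gt0 // exprn_gt0. Qed.

Lemma gen_split n : gen n = gen n.+1 + gen n.+1 + gen n.+1.
Proof. rewrite /gen [in RHS]exprS. field. by rewrite expf_neq0. Qed.

Lemma sum_ge0 (s : seq nat) : 0 <= \sum_(n <- s) gen n.
Proof. by apply: sumr_ge0 => n _; apply: ltW; apply: gen_gt0. Qed.

Lemma inM_ge0 q : inM q -> 0 <= q.
Proof. by case=> a [s ->]; apply: addr_ge0; [rewrite ler0n | apply: sum_ge0]. Qed.

Lemma inM_gt0 q : inM q -> q != 0 -> 0 < q.
Proof. by move=> /inM_ge0 H Hq; rewrite lt_neqAle eq_sym Hq. Qed.

Lemma sum_form (s : seq nat) : exists m N,
  (\sum_(n <- s) gen n) * 3%:R ^+ N = (2 * m)%:R.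
Proof.
elim: s => [|n s [m [N IH]]]; first by exists 0%N, 0%N; rewrite big_nil mul0r.
exists (3 ^ N + m * 3 ^ n.+1)%N, (N + n.+1)%N.
have HS : \sum_(j <- s) gen j = (2 * m)%:R / 3%:R ^+ N.
  by rewrite -IH mulfK // expf_neq0.
rewrite big_cons HS exprD /gen !(natrM, natrD, natrX).
field. by rewrite !expf_neq0.
Qed.

Lemma inM_lt1 q : inM q -> q < 1 -> exists m N, q * 3%:R ^+ N = (2 * m)%:R.
Proof.
case=> a [s ->] Hlt.
have Ha : a = 0%N.
  apply/eqP; rewrite -leqn0 -ltnS; rewrite -(ltr_nat rat).
  apply: le_lt_trans Hlt; rewrite lerDl; exact: sum_ge0.
by rewrite Ha add0r; apply: sum_form.
Qed.

Lemma atom1 : atomM 1.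
Proof.
split; first by exists 1%N, [::]; rewrite big_nil addr0.
split; first by rewrite oner_eq0.
case=> a [b [Ma [Mb [a0 [b0 Hab]]]]].
have Hapos := inM_gt0 Ma a0; have Hbpos := inM_gt0 Mb b0.
have [ma [Na Ha]] := inM_lt1 Ma (ltac:(lra)).
have [mb [Nb Hb]] := inM_lt1 Mb (ltac:(lra)).
have H : ((3 ^ (Na + Nb))%N%:R : rat) = (2 * (ma * 3 ^ Nb + mb * 3 ^ Na))%N%:R.
  rewrite !(natrM, natrD, natrX) exprD.
  have -> : 3%:R ^+ Na * 3%:R ^+ Nb = (a + b) * (3%:R ^+ Na * 3%:R ^+ Nb) :> rat.
    by rewrite -Hab mul1r.
  rewrite natrM in Ha; rewrite natrM in Hb.
  have -> : 2%:R * (ma%:R * 3%:R ^+ Nb + mb%:R * 3%:R ^+ Na) =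
    (2%:R * ma%:R) * 3%:R ^+ Nb + (2%:R * mb%:R) * 3%:R ^+ Na :> rat by ring.
  rewrite -Ha -Hb; ring.
move/eqP: H; rewrite eqr_nat => /eqP /(congr1 odd).
by rewrite oddX oddM /= orbT.
Qed.

Lemma atom_iff q : atomM q <-> q = 1.
Proof.
split; last by move=> ->; exact: atom1.
case=> [[a [s Hq]] [q0 Hn]]; case: (eqVneq q 1) => [//|/eqP Hq1]; exfalso; apply: Hn.
case: a Hq => [|a] Hq.
  case: s Hq => [|n s] Hq; first by move: q0; rewrite Hq big_nil addr0 eqxx.
  exists (gen n.+1), (gen n.+1 + gen n.+1 + \sum_(j <- s) gen j).
  split; first by exists 0%N, [:: n.+1]; rewrite big_seq1 add0r.
  split; first by exists 0%N, [:: n.+1, n.+1 & s]; rewrite !big_cons add0r addrA.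
  split; first by rewrite gt_eqF // gen_gt0.
  split; first by rewrite gt_eqF // ltr_pwDl ?sum_ge0 // addr_gt0 // gen_gt0.
  by rewrite Hq big_cons add0r -/(gen n) (gen_split n) !addrA.
exists 1, (a%:R + \sum_(j <- s) gen j).
split; first by exists 1%N, [::]; rewrite big_nil addr0.
split; first by exists a, s.
split; first by rewrite oner_eq0.
split.
  apply/eqP => H; apply: Hq1; rewrite Hq -nat1r -addrA.
  by rewrite [X in 1 + X = _]H addr0.
by rewrite Hq -nat1r addrA.
Qed.

Section S.
Variable k : fieldType.
Implicit Types g h u v f : mpoly k.

Definition ell g : seq rat := undup [seq p.2 | p <- g].

Lemma mcoef1 (c : k) (e q : rat) : mcoef [:: (c, e)] q = if e == q then c else 0.
Proof. by rewrite /mcoef big_cons big_nil /=; case: eqP => _; rewrite ?addr0. Qed.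

Lemma mcoef_mul_raw g h q : mcoef (mmul g h) q = \sum_(a <- g) a.1 * mcoef h (q - a.2).
Proof.
rewrite /mcoef /mmul big_mkcond big_allpairs_dep /=.
apply: (eq_bigr (fun a => _)) => a _; rewrite mulr_sumr [RHS]big_mkcond; apply: eq_bigr => b _ /=.
have -> : (b.2 == q - a.2) = (a.2 + b.2 == q).
  by apply/eqP/eqP => H; [rewrite H; ring | rewrite -H; ring].
by case: ifP; rewrite ?mulr0.
Qed.

Lemma group_sum g (F : rat -> k) :
  \sum_(a <- g) a.1 * F a.2 = \sum_(e <- ell g) mcoef g e * F e.
Proof.
rewrite /mcoef.
under [RHS]eq_bigr => e _ do rewrite big_distrl /= big_mkcond.
rewrite exchange_big /=; apply: eq_big_seq => a Ha.
rewrite (bigD1_seq a.2) ?undup_uniq ?mem_undup ?map_f //= eqxx big1 ?addr0 //.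
by move=> e /negPf; rewrite eq_sym => ->.
Qed.

Lemma mcoef_mul g h q :
  mcoef (mmul g h) q = \sum_(e <- ell g) mcoef g e * mcoef h (q - e).
Proof. by rewrite mcoef_mul_raw (group_sum g (fun e => mcoef h (q - e))). Qed.

Lemma supp_ell g e : mcoef g e != 0 -> e \in ell g.
Proof.
rewrite mem_undup; apply: contraR => He.
rewrite /mcoef big1_seq // => a /andP [/eqP Ha Ia].
by case/negP: He; rewrite -Ha map_f.
Qed.


Lemma seq_max (s : seq rat) (w : rat -> rat) : s != [::] ->
  exists2 E, E \in s & forall e, e \in s -> w e <= w E.
Proof.
elim: s => [//|x s IH] _.
case: (eqVneq s [::]) => [->|/IH [E' HE' Hm]].
  by exists x => [|e]; rewrite ?inE // => /eqP ->.
case: (lerP (w x) (w E')) => Hx.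
  exists E'; first by rewrite inE HE' orbT.
  by move=> e; rewrite inE => /orP [/eqP ->|/Hm].
exists x; first by rewrite inE eqxx.
move=> e; rewrite inE => /orP [/eqP ->//|/Hm He]; apply: le_trans He _; exact: ltW.
Qed.

Lemma ex_ext f (w : rat -> rat) : ~ mzero f ->
  exists E, mcoef f E != 0 /\ forall e, mcoef f e != 0 -> w e <= w E.
Proof.
move=> Hf.
have Hs : [seq e <- ell f | mcoef f e != 0] != [::].
  apply/eqP => Hnil; apply: Hf => q; apply/eqP; apply: contraT => Hq.
  have : q \in [seq e <- ell f | mcoef f e != 0] by rewrite mem_filter Hq supp_ell.
  by rewrite Hnil.
have [E HE Hm] := seq_max w Hs.
move: HE; rewrite mem_filter => /andP [HE _].
exists E; split => // e He; apply: Hm; by rewrite mem_filter He supp_ell.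
Qed.

Lemma prod_ext (s : rat) g h Eg Eh : s != 0 ->
  mcoef g Eg != 0 -> (forall e, mcoef g e != 0 -> s * e <= s * Eg) ->
  mcoef h Eh != 0 -> (forall e, mcoef h e != 0 -> s * e <= s * Eh) ->
  mcoef (mmul g h) (Eg + Eh) = mcoef g Eg * mcoef h Eh /\
  (forall q, mcoef (mmul g h) q != 0 -> s * q <= s * (Eg + Eh)).
Proof.
move=> hs Hg Hgm Hh Hhm; split.
  rewrite mcoef_mul (bigD1_seq Eg) ?undup_uniq ?supp_ell //=.
  rewrite big1 ?addr0; first by congr (_ * mcoef h _); ring.
  move=> e He; case: (eqVneq (mcoef g e) 0) => [->|Hge]; first by rewrite mul0r.
  have Hlt : s * e < s * Eg.
    by rewrite lt_neqAle Hgm // andbT (inj_eq (mulfI hs)).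
  case: (eqVneq (mcoef h (Eg + Eh - e)) 0) => [->|Hhe]; first by rewrite mulr0.
  have := Hhm _ Hhe; rewrite !mulrDr mulrN => H. exfalso. lra.
move=> q Hq; rewrite leNgt; apply/negP => Hlt; case/eqP: Hq.
rewrite mcoef_mul big1 // => e _.
case: (eqVneq (mcoef g e) 0) => [->|Hge]; first by rewrite mul0r.
case: (eqVneq (mcoef h (q - e)) 0) => [->|Hhe]; first by rewrite mulr0.
have := Hhm _ Hhe; have := Hgm _ Hge; rewrite !mulrDr mulrN => H1 H2. exfalso. lra.
Qed.

Lemma mzero_mul g h : mzero g -> mzero (mmul g h).
Proof. by move=> Hg q; rewrite mcoef_mul big1 // => e _; rewrite Hg mul0r. Qed.


Lemma const_unit u : (forall q, mcoef u q != 0 -> q = 0) -> mcoef u 0 != 0 -> unitR u.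
Proof.
move=> Hs H0; split.
  by move=> q /Hs ->; exists 0%N, [::]; rewrite big_nil addr0.
exists [:: ((mcoef u 0)^-1, 0)]; split.
  move=> q; rewrite mcoef1; case: ifP => [/eqP Eq _|_]; last by rewrite eqxx.
  by subst; exists 0%N, [::]; rewrite big_nil addr0.
move=> q; rewrite mcoef_mul (bigD1_seq 0) ?undup_uniq ?supp_ell //= big1 ?addr0.
  rewrite /mone !mcoef1; case: ifP => _; first by rewrite mulfV.
  by rewrite mulr0.
move=> e He; case: (eqVneq (mcoef u e) 0) => [->|/Hs He0]; first by rewrite mul0r.
by rewrite He0 eqxx in He.
Qed.

Lemma pos_nonunit u : (forall q, mcoef u q != 0 -> 0 < q) -> ~ unitR u.
Proof.
move=> Hp [_ [v [Hv Huv]]]; have := Huv 0.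
rewrite /mone mcoef1 eqxx mcoef_mul big1; first by move/eqP; rewrite eq_sym oner_eq0.
move=> e _; case: (eqVneq (mcoef u e) 0) => [->|/Hp He]; first by rewrite mul0r.
case: (eqVneq (mcoef v (0 - e)) 0) => [->|/Hv /inM_ge0]; first by rewrite mulr0.
rewrite sub0r oppr_ge0 => H; exfalso; lra.
Qed.

Lemma nz_ex f : ~ mzero f -> exists E, mcoef f E != 0.
Proof. by move=> /(ex_ext id) [E [H _]]; exists E. Qed.

Lemma irr_mono f E : irreducibleR f -> (forall q, mcoef f q != 0 -> q = E) -> E = 1.
Proof.
case=> Hf [Hnz [Hnu Hirr]] Hs.
have HE : mcoef f E != 0 by have [E' HE'] := nz_ex Hnz; rewrite -(Hs _ HE').
have ME := Hf E HE.
case: (eqVneq E 0) => [E0|En0].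
  exfalso; apply: Hnu; apply: const_unit; last by rewrite -E0.
  by move=> q /Hs; rewrite E0.
case: (eqVneq E 1) => [//|En1]; exfalso.
have : ~ atomM E by move/atom_iff => H; rewrite H eqxx in En1.
case; split => //; split => //; case=> a [b [Ma [Mb [a0 [b0 Eab]]]]].
have Ha := inM_gt0 Ma a0; have Hb := inM_gt0 Mb b0.
have [] := Hirr [:: (1, a)] [:: (mcoef f E, b)].
- move=> q; rewrite mcoef1; case: ifP => [/eqP <- //|]; by rewrite eqxx.
- move=> q; rewrite mcoef1; case: ifP => [/eqP <- //|]; by rewrite eqxx.
- move=> q; rewrite /mmul /= mcoef1 -Eab mul1r.
  case: eqP => [->//|Hne]; apply/eqP; apply: contraT => Hq.
  by case: Hne; rewrite (Hs q Hq).
- apply: pos_nonunit => q; rewrite mcoef1; case: ifP => [/eqP <- //|]; by rewrite eqxx.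
- apply: pos_nonunit => q; rewrite mcoef1; case: ifP => [/eqP <- //|]; by rewrite eqxx.
Qed.

Lemma prod_ext_list fs : (forall g, g \in fs -> irreducibleR g) ->
  exists Mx mn, mcoef (mprod fs) Mx != 0 /\ mcoef (mprod fs) mn != 0 /\
   (forall q, mcoef (mprod fs) q != 0 -> 1 * q <= 1 * Mx) /\
   (forall q, mcoef (mprod fs) q != 0 -> -1 * q <= -1 * mn) /\
   (Mx = mn -> Mx = (size fs)%:R).
Proof.
elim: fs => [|f fs IH] Hirr.
  have H0 : forall q, mcoef (mprod (k:=k) [::]) q != 0 -> q = 0.
    by move=> q; rewrite /= /mone mcoef1; case: ifP => [/eqP -> //|]; rewrite eqxx.
  exists 0, 0; rewrite /= /mone !mcoef1 eqxx oner_eq0.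
  split; first done. split; first done.
  split; first by move=> q /H0 ->.
  by split; first by move=> q /H0 ->.
have Hf : irreducibleR f by apply: Hirr; rewrite inE eqxx.
have Hfs : forall g, g \in fs -> irreducibleR g.
  by move=> g Hg; apply: Hirr; rewrite inE Hg orbT.
have [Mx [mn [HMx [Hmn [HbM [Hbm Heq]]]]]] := IH Hfs.
case: (Hf) => _ [Hnz _].
have [Mf [HMf HbMf]] := ex_ext (fun e => 1 * e) Hnz.
have [mf [Hmf Hbmf]] := ex_ext (fun e => -1 * e) Hnz.
have hs1 : (1 : rat) != 0 by rewrite oner_eq0.
have hs2 : (-1 : rat) != 0 by rewrite oppr_eq0 oner_eq0.
have [P1 B1] := prod_ext hs1 HMf HbMf HMx HbM.
have [P2 B2] := prod_ext hs2 Hmf Hbmf Hmn Hbm.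
exists (Mf + Mx), (mf + mn); rewrite [mprod _]/=.
split; first by rewrite P1 mulf_neq0.
split; first by rewrite P2 mulf_neq0.
split => //; split => // E.
have h1 := HbMf _ Hmf; have h2 := Hbmf _ HMf; have h3 := HbM _ Hmn; have h4 := Hbm _ HMx.
rewrite !mul1r !mulN1r in h1 h2 h3 h4.
have eMf : Mf = mf by lra.
have eMx : Mx = mn by lra.
rewrite (Heq eMx) (@irr_mono f Mf) ?nat1r //.
move=> q Hq; have := HbMf _ Hq; have := Hbmf _ Hq; rewrite !mul1r !mulN1r => g1 g2.
lra.
Qed.

Lemma not_atomic f e : (forall q, mcoef f q != 0 -> q = e) ->
  (forall n : nat, e != n%:R) -> ~ atomicR f.
Proof.
move=> Hs Hn [fs [Hirr Hmeq]].
have [Mx [mn [HMx [Hmn [_ [_ Heq]]]]]] := prod_ext_list Hirr.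
have eM : Mx = e by apply: Hs; rewrite Hmeq.
have em : mn = e by apply: Hs; rewrite Hmeq.
have := Hn (size fs); rewrite -eM (Heq _) ?eqxx //; by rewrite eM em.
Qed.

End S.

Lemma third_not_nat (m n : nat) : (m%:R / 3%:R : rat) = n%:R -> m = (3 * n)%N.
Proof.
move=> H; apply/eqP; rewrite -(eqr_nat rat) natrM.
by rewrite -H mulrC divfK.
Qed.

Lemma mmono_supp (k : fieldType) (e q : rat) : mcoef (mmono k e) q != 0 -> q = e.
Proof. by rewrite /mmono mcoef1; case: ifP => [/eqP -> //|]; rewrite eqxx. Qed.

Lemma mzero_mulr (k : fieldType) (g h : mpoly k) : mzero h -> mzero (mmul g h).
Proof. by move=> Hh q; rewrite mcoef_mul big1 // => e _; rewrite Hh mulr0. Qed.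

Lemma x_irr (k : fieldType) : irreducibleR (mmono k 1).
Proof.
have M1 : inM 1 by case: atom1.
split; first by move=> q /mmono_supp ->.
split; first by move/(_ 1); rewrite /mmono mcoef1 eqxx; apply/eqP; rewrite oner_eq0.
split; first by apply: pos_nonunit => q /mmono_supp ->.
move=> g h Hg Hh Hm.
have X1 : mcoef (mmono k 1) 1 != 0 by rewrite /mmono mcoef1 eqxx oner_eq0.
have Hgz : ~ mzero g by move=> /(mzero_mul h) /(_ 1); rewrite -Hm; apply/eqP.
have Hhz : ~ mzero h by move=> /(mzero_mulr g) /(_ 1); rewrite -Hm; apply/eqP.
have [Mg [HMg HbMg]] := ex_ext (fun e => 1 * e) Hgz.
have [Mh [HMh HbMh]] := ex_ext (fun e => 1 * e) Hhz.
have hs1 : (1 : rat) != 0 by rewrite oner_eq0.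
have [P1 _] := prod_ext hs1 HMg HbMg HMh HbMh.
have E1 : Mg + Mh = 1.
  apply: (@mmono_supp k); rewrite Hm P1; exact: mulf_neq0.
have [_ [_ Hat]] := atom1.
case: (eqVneq Mg 0) => [Mg0|Mg0].
  left; apply: const_unit; last by rewrite -Mg0.
  move=> q Hq; have := HbMg _ Hq; have := inM_ge0 (Hg _ Hq); rewrite !mul1r Mg0 => a b.
  by apply/eqP; rewrite eq_le a b.
case: (eqVneq Mh 0) => [Mh0|Mh0].
  right; apply: const_unit; last by rewrite -Mh0.
  move=> q Hq; have := HbMh _ Hq; have := inM_ge0 (Hh _ Hq); rewrite !mul1r Mh0 => a b.
  by apply/eqP; rewrite eq_le a b.
exfalso; apply: Hat; exists Mg, Mh; split; first exact: Hg.
split; first exact: Hh. by do 2 split => //.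
Qed.

Theorem mainTheorem4 (k : fieldType) :
  (forall q : rat, atomM q <-> q = 1) /\
  (forall n : nat, ~ atomM (2%:R / 3%:R ^+ n.+1)) /\
  irreducibleR (mmono k 1) /\
  ~ atomicR (mmono k (2%:R / 3%:R)) /\
  meq (mmul (mmono k 1) (mmono k 1))
      (mmul (mmono k (2%:R / 3%:R)) (mmul (mmono k (2%:R / 3%:R)) (mmono k (2%:R / 3%:R)))) /\
  (exists f g : mpoly k, nonatomicR f /\ nonatomicR g /\ ~ nonatomicR (mmul f g)).
Proof.
have NA23 : ~ atomicR (mmono k (2%:R / 3%:R)).
  apply: (not_atomic (@mmono_supp k _)) => n; apply/eqP => /third_not_nat H.
  lia.
have M23 : inM (2%:R / 3%:R) by exists 0%N, [:: 0%N]; rewrite big_seq1 add0r expr1.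
have P23 : (0 : rat) < 2%:R / 3%:R by [].
split; first exact: atom_iff.
split.
  move=> n /atom_iff H.
  have : (2%:R : rat) = (3 ^ n.+1)%N%:R.
    have nz : (3%:R ^+ n.+1 : rat) != 0 by rewrite expf_neq0.
    have H' := congr1 (fun y => y * 3%:R ^+ n.+1) H; rewrite /= divfK // mul1r in H'.
    by rewrite natrX.
  move/eqP; rewrite eqr_nat expnS => /eqP; lia.
split; first exact: x_irr.
split; first exact: NA23.
split.
  move=> q; rewrite /mmul /mmono /= !mcoef1 !mulr1.
  have -> : (2%:R / 3%:R + (2%:R / 3%:R + 2%:R / 3%:R) : rat) = 1 + 1.
    by apply/eqP; vm_compute.
  by [].
set f := mmono k (2%:R / 3%:R).
have Hgf : forall q, mcoef (mmul f f) q = if (4%:R / 3%:R == q) then 1 else 0.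
  move=> q; rewrite /mmul /f /mmono /= mcoef1 mulr1.
  have -> : (2%:R / 3%:R + 2%:R / 3%:R : rat) = 4%:R / 3%:R by apply/eqP; vm_compute.
  by [].
have Hgs : forall q, mcoef (mmul f f) q != 0 -> q = 4%:R / 3%:R.
  by move=> q; rewrite Hgf; case: ifP => [/eqP -> //|]; rewrite eqxx.
exists f, (mmul f f); split.
  split; first by move=> q /mmono_supp ->.
  split; first by move/(_ (2%:R / 3%:R)); rewrite /f /mmono mcoef1 eqxx; apply/eqP; rewrite oner_eq0.
  split; first by apply: pos_nonunit => q /mmono_supp ->.
  exact: NA23.
split.
  split.
    move=> q /Hgs ->; exists 0%N, [:: 0%N; 0%N]; rewrite !big_cons big_nil.
    by apply/eqP; vm_compute.
  split; first by move/(_ (4%:R / 3%:R)); rewrite Hgf eqxx; apply/eqP; rewrite oner_eq0.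
  split; first by apply: pos_nonunit => q /Hgs ->.
  apply: (not_atomic Hgs) => n; apply/eqP => /third_not_nat H; lia.
case=> _ [_ [_ []]].
exists [:: mmono k 1; mmono k 1]; split.
  by move=> g; rewrite !inE orbb => /eqP ->; exact: x_irr.
move=> q; rewrite /mprod /mmul /f /mmono /mone /= !mcoef1 !mulr1.
have -> : (2%:R / 3%:R + (2%:R / 3%:R + 2%:R / 3%:R) : rat) = 1 + (1 + 0).
  by apply/eqP; vm_compute.
by [].
Qed.
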